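(* Let $X$ be a real-valued semimartingale with independent increments, with deterministic differential characteristics $(b^{X[1]}_t,c^X_t,F^X_t)$ relative to an activity process $A$ and the truncation $x\mathbf 1_{\{|x|\le1\}}$. For each $t$, define $\psi:\mathbb{R}\to[-\infty,\infty)$ by $$\psi(y)=b^{X[1]}_ty-\tfrac12c^X_ty^2+\int_{\mathbb{R}}\big(g_{\mathrm{MMV}}(xy)-xy\mathbf 1_{\{|x|\le1\}}\big)F^X_t(dx).$$ Then $$\infty>\lim_{y\to\infty}\frac{\psi(y)}{y}=b^{X[1]}_t-\int_{\mathbb{R}}x\mathbf 1_{\{0<x\le1\}}F^X_t(dx)-\infty\big(\mathbf 1_{\{c^X_t>0\}}+\mathbf 1_{\{F^X_t((-\infty,0))>0\}}\big),$$ with the convention $\infty\times0=0$.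
   Context: Here $g_{\mathrm{MMV}}(x)=x\wedge1-\frac12(x\wedge1)^2$. The characteristics are understood as follows: $X-\sum_{s\le\cdot}\Delta X_s\mathbf 1_{\{|\Delta X_s|>1\}}$ has drift $b^{X[1]}\cdot A$, $\langle X^c,X^c\rangle=c^X\cdot A$, and the jump compensator is $F^X_t(dx)\,dA_t$. $F^X_t$ is a Lévy measure, i.e. $\int(x^2\wedge1)F^X_t(dx)<\infty$ and $F^X_t(\{0\})=0$. *)

(* Defs.v *)
From HB Require Import structures.
From mathcomp Require Import all_boot all_order all_algebra.
From mathcomp Require Import all_classical all_reals all_analysis.
Set Implicit Arguments. Unset Strict Implicit. Unset Printing Implicit Defensive.
Import Order.TTheory GRing.Theory Num.Theory.
Import numFieldNormedType.Exports.
Local Open Scope classical_set_scope.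
Local Open Scope ring_scope.

Definition gMMV {R : realType} (x : R) : R :=
  Num.min x 1 - (Num.min x 1) ^+ 2 / 2.

Definition levy_measure {R : realType}
    (F : {measure set R -> \bar R}) : Prop :=
  F [set 0] = 0%E /\
  (\int[F]_x (Num.min ((x : R) ^+ 2) 1)%:E < +oo)%E.

Definition psiX {R : realType} (b c : R)
    (F : {measure set R -> \bar R}) (y : R) : \bar R :=
  ((b * y - c * y ^+ 2 / 2)%:E +
   \int[F]_x (gMMV ((x : R) * y) - x * y * ((Num.norm x <= 1)%R : bool)%:R)%:E)%E.

Definition psi_slope_limit {R : realType} (b c : R)
    (F : {measure set R -> \bar R}) : \bar R :=
  (b%:E - \int[F]_(x in `]0%R, 1%R]) (x : R)%:E
   - (if (0 < c)%R || (0 < F [set x : R | (x < 0)%R])%E then +oo else 0))%E.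

(* Main.v *)
Require Import Defs.
From HB Require Import structures.
From mathcomp Require Import all_boot all_order all_algebra.
From mathcomp Require Import all_classical all_reals all_analysis.
From mathcomp Require Import ring lra measurable_realfun.
Import Order.TTheory GRing.Theory Num.Theory.
Import numFieldNormedType.Exports.
Local Open Scope classical_set_scope.
Local Open Scope ring_scope.

Section S.
Variable R : realType.
Definition hh (y x : R) : R := gMMV (x * y) - x * y * ((Num.norm x <= 1)%R : bool)%:R.
Definition qq (y x : R) : R := Num.max (- hh y x) 0.
Definition nn (y x : R) : R := qq y x / y.

Lemma hpos y x : 1 <= y -> Num.max (hh y x) 0 = ((1 < x)%R : bool)%:R / 2.
Proof.
move=> y1; rewrite /hh /gMMV.
have [x1|x1] := ltP 1 x.
  have -> : (`|x| <= 1) = false by apply/negbTE; rewrite -ltNge ltr_normr x1.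
  rewrite (_ : Num.min (x*y) 1 = 1); last by rewrite min_r //; nra.
  rewrite mulr0 subr0 mul1r expr1n max_l; lra.
rewrite mul0r max_r //.
case: (ler0P x) => x0.
  have [xn|xn] := boolP (- x <= 1); rewrite /= ?mulr1 ?mulr0;
  rewrite (_ : Num.min (x*y) 1 = x*y); try (by rewrite min_l //; nra);
  nra.
rewrite x1 /=.
rewrite mulr1; case: (leP (x*y) 1) => xy.
  nra.
nra.
Qed.

Definition nnf (y x : R) : R :=
  if 1 < x then 0 else if x < 0 then (if x < -1 then x^+2*y/2 - x else x^+2*y/2)
  else (if x*y <= 1 then x^+2*y/2 else x - 1/(2*y)).

Lemma nnE y x : 0 < y -> nn y x = nnf y x.
Proof.
move=> y0; rewrite /nn /qq /hh /gMMV /nnf.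
have [x1|x1] := ltP 1 x.
  have -> : (`|x| <= 1) = false by apply/negbTE; rewrite -ltNge ltr_normr x1.
  rewrite max_r ?mul0r //.
  have xy0 : 0 < x * y by apply: mulr_gt0 => //; lra.
  rewrite mulr0 subr0; case: (leP (x*y) 1) => xy; nra.
case: (ltrP x 0) => x0.
  rewrite ltr0_norm //.
  have xy0 : x * y < 0 by rewrite pmulr_llt0.
  case: (ltrP x (-1)) => xm.
    have -> : (- x <= 1) = false by apply/negbTE; rewrite -ltNge; lra.
    rewrite /= mulr0 subr0 min_l; last nra.
    rewrite max_l; last nra.
    apply: (@mulIf _ y); first by rewrite gt_eqF.
    rewrite divfK ?gt_eqF //; by field.
  have -> : (- x <= 1) by rewrite lerNl.
  rewrite /= mulr1 min_l; last nra.
  rewrite max_l; last nra.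
  apply: (@mulIf _ y); first by rewrite gt_eqF.
  rewrite divfK ?gt_eqF //; by field.
rewrite ger0_norm // x1 /= mulr1.
case: (leP (x*y) 1) => xy.
  rewrite max_l; last nra.
  apply: (@mulIf _ y); first by rewrite gt_eqF.
  rewrite divfK ?gt_eqF //; by field.
rewrite max_l; last nra.
apply: (@mulIf _ y); first by rewrite gt_eqF.
rewrite divfK ?gt_eqF //; field; rewrite gt_eqF //.
Qed.

Lemma nnf_mono (x y1 y2 : R) : 0 < y1 -> y1 <= y2 -> nnf y1 x <= nnf y2 x.
Proof.
move=> y10 y12; have y20 : 0 < y2 := lt_le_trans y10 y12.
rewrite /nnf; case: ifP => // x1; case: ifP => x0.
  have x2 : 0 <= x ^+ 2 by apply: sqr_ge0.
  case: ifP => _; nra.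
have i12 : 1 / (2 * y2) <= 1 / (2 * y1).
  by rewrite !div1r lef_pV2 ?posrE ?mulr_gt0 //; lra.
have x0' : 0 <= x by rewrite leNgt x0.
case: ifP => h1; case: ifP => h2.
- have x2 : 0 <= x ^+ 2 by apply: sqr_ge0. nra.
- have : 1 / (2 * y2) < x / 2.
    rewrite ltr_pdivrMr ?mulr_gt0 //; nra.
  nra.
- nra.
- lra.
Qed.

Lemma nnf_ge0 (y x : R) : 0 < y -> 0 <= nnf y x.
Proof.
move=> y0; rewrite -nnE // /nn; apply: divr_ge0; last exact: ltW.
rewrite /qq; case: (leP (- hh y x) 0) => h //; exact: ltW.
Qed.

Definition ninf (x : R) : \bar R :=
  if x < 0 then +oo%E else if x <= 1 then x%:E else 0%E.

Lemma nnf_le (y x : R) : 0 < y -> ((nnf y x)%:E <= ninf x)%E.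
Proof.
move=> y0; rewrite /ninf /nnf; case: ifP => x1.
  by rewrite (ltNge x 0) (ltW (lt_trans ltr01 x1)) /= (leNgt x 1) x1.
case: ifP => x0; first by rewrite leey.
have x1' : x <= 1 by rewrite leNgt x1.
have x0' : 0 <= x by rewrite leNgt x0.
rewrite x1' lee_fin; case: ifP => xy.
  nra.
rewrite lerBlDr lerDl; apply: divr_ge0 => //; nra.
Qed.

Lemma nnf_cvg (x : R) : (fun k : nat => (nnf k.+1%:R x)%:E) @ \oo --> ninf x.
Proof.
rewrite /ninf; case: ifPn => x0.
  apply/cvgeryP/cvgryPge => A.
  have x2 : 0 < x ^+ 2 by rewrite exprn_even_gt0 //= lt_eqF.
  near=> k.
  have k0 : (0 : R) < k.+1%:R by [].
  have kA : 2 * A / x ^+ 2 <= k.+1%:R.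
    near: k; apply: filterS (nbhs_infty_ger (2 * A / x ^+ 2)) => k /le_trans; apply.
    by rewrite ler_nat.
  have : 2 * A <= k.+1%:R * x ^+ 2 by rewrite -ler_pdivrMr.
  rewrite /nnf ltNge (ltW (lt_trans x0 ltr01)) /= x0.
  case: ifP => _; nra.
have x0' : 0 <= x by rewrite leNgt.
case: ifPn => x1; last first.
  rewrite (_ : (fun k : nat => _) = fun _ => 0%E); first exact: cvg_cst.
  by apply/funext => k; rewrite /nnf ltNge x1.
apply: cvg_EFin; first by near=> k.
apply/cvgrPdist_le => e e0.
near=> k.
have k0 : (0 : R) < k.+1%:R by [].
have ke : e^-1 <= k.+1%:R.
  near: k; apply: filterS (nbhs_infty_ger (e^-1)) => k /le_trans; apply.
  by rewrite ler_nat.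
have ik : 1 / (2 * k.+1%:R) <= e.
  rewrite ler_pdivrMr ?mulr_gt0 // -(@ler_pM2l _ e^-1) ?invr_gt0 // mulrA mulVf ?gt_eqF //.
  rewrite mul1r; nra.
rewrite /= /nnf ltNge x1 /= (negbTE x0) /=.
have i0 : 0 <= (1 : R) / (2 * k.+1%:R) by apply: divr_ge0 => //; apply: mulr_ge0 => //; exact: ltW.
case: ifP => xy.
  rewrite ger0_norm; last nra.
  have sq : (x * k.+1%:R - 1) ^+ 2 >= 0 by apply: sqr_ge0.
  have h1 : (x - x ^+ 2 * k.+1%:R / 2) * (2 * k.+1%:R) <= 1.
    have -> : (x - x ^+ 2 * k.+1%:R / 2) * (2 * k.+1%:R) = 1 - (x * k.+1%:R - 1) ^+ 2.
      by field.
    lra.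
  have h2 : x - x ^+ 2 * k.+1%:R / 2 <= 1 / (2 * k.+1%:R).
    by rewrite ler_pdivlMr ?mulr_gt0.
  exact: le_trans h2 ik.
rewrite opprB addrC subrK ger0_norm //.
Unshelve. all: by end_near.
Qed.

Lemma mhh y : measurable_fun setT (hh y).
Proof.
rewrite /hh /gMMV.
have mxy : measurable_fun setT (fun x : R => x * y).
  by apply: measurable_funM => //; exact: measurable_id.
have mm : measurable_fun setT (fun x : R => Num.min (x * y) 1).
  exact: measurable_minr.
apply: measurable_funB.
  apply: measurable_funB => //.
  by apply: measurable_funM => //; exact: measurable_funX.
apply: measurable_funM => //.
rewrite (_ : (fun x : R => ((Num.norm x <= 1)%R : bool)%:R : R) =
   (fun x : R => if (Num.norm x <= 1)%R then (1:R) else 0)); last first.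
  by apply/funext => x; case: ifP.
apply: measurable_fun_ifT => //.
apply: measurable_fun_ler => //; exact: normr_measurable.
Qed.

Lemma mnnf y : 0 < y -> measurable_fun setT (nnf y).
Proof.
move=> y0; rewrite (_ : nnf y = nn y); last by apply/funext => x; rewrite nnE.
apply: measurable_funM => //.
apply: measurable_maxr => //; apply: measurable_funN; exact: mhh.
Qed.

Lemma mninf : measurable_fun setT ninf.
Proof.
rewrite /ninf; apply: measurable_fun_ifT => //.
  apply: measurable_fun_ltr => //; exact: measurable_id.
apply: measurable_fun_ifT => //.
  apply: measurable_fun_ler => //; exact: measurable_id.
Qed.

Section WithF.
Variable F : {measure set R -> \bar R}.
Local Open Scope ereal_scope.

Lemma mnnf_E (y : R) : (0 < y)%R -> measurable_fun setT (fun x => (nnf y x)%:E).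
Proof. by move=> y0; apply/measurable_EFinP; exact: mnnf. Qed.
Lemma nnf_ge0E (x y : R) : (0 < y)%R -> 0 <= (nnf y x)%:E.
Proof. by move=> y0; rewrite lee_fin nnf_ge0. Qed.
Lemma nnf_monoE (x : R) (m n : nat) : (0 < m.+1%:R :> R)%R -> (m <= n)%N ->
  (nnf m.+1%:R x)%:E <= (nnf n.+1%:R x)%:E.
Proof. by move=> m0 mn; rewrite lee_fin nnf_mono // ler_nat. Qed.

Definition phi (y : R) : \bar R := \int[F]_x (nnf (Num.max y 1) x)%:E.

Lemma max1_gt0 (y : R) : (0 < Num.max y 1)%R.
Proof. by rewrite lt_max ltr01 orbT. Qed.

Lemma phi_nd : nondecreasing_fun phi.
Proof.
move=> y1 y2 y12; rewrite /phi; apply: ge0_le_integral => //.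
- by move=> x _; rewrite lee_fin nnf_ge0 // max1_gt0.
- by apply/measurable_EFinP; apply: mnnf; exact: max1_gt0.
- by apply/measurable_EFinP; apply: mnnf; exact: max1_gt0.
- move=> x _; rewrite lee_fin; apply: nnf_mono; first exact: max1_gt0.
  by rewrite ge_max !le_max y12 lexx !orbT.
Qed.

Lemma phi_le (y : R) : phi y <= \int[F]_x ninf x.
Proof.
rewrite /phi; apply: ge0_le_integral => //.
- by move=> x _; rewrite lee_fin nnf_ge0 // max1_gt0.
- by apply/measurable_EFinP; apply: mnnf; exact: max1_gt0.
- exact: mninf.
- by move=> x _; apply: nnf_le; exact: max1_gt0.
Qed.

Lemma phi_cvg : phi y @[y --> +oo%R] --> \int[F]_x ninf x.
Proof.
suff <- : ereal_sup (range phi) = \int[F]_x ninf x.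
  exact: nondecreasing_cvge phi_nd.
apply/eqP; rewrite eq_le; apply/andP; split.
  by apply: ge_ereal_sup => _ [y _ <-]; exact: phi_le.
have mc := @cvg_monotone_convergence _ _ _ F setT measurableT
  (fun k x => (nnf k.+1%:R x)%:E).
have k0 (k : nat) : (0 < k.+1%:R :> R)%R by [].
have {}mc := mc (fun k => mnnf_E _ (k0 k)).
have {}mc := mc (fun k x _ => nnf_ge0E x _ (k0 k)).
have {}mc := mc (fun x _ m n mn => nnf_monoE x m n (k0 m) mn).
rewrite (_ : (fun x => limn _) = ninf) in mc; last first.
  by apply/funext => x; apply/cvg_lim => //; exact: nnf_cvg.
apply: (cvge_to_le mc); apply: nearW => k.
apply: ereal_sup_ubound; exists k.+1%:R => //.
rewrite /phi; apply: eq_integral => x _.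
by rewrite (_ : Num.max _ _ = k.+1%:R) // max_l // ler1n.
Qed.



Definition Aneg := [set x : R | (x < 0)%R].

Lemma mAneg : measurable Aneg.
Proof.
rewrite (_ : Aneg = `]-oo, 0%R[%classic); first exact: measurable_itv.
by apply/seteqP; split => x /=; rewrite in_itv.
Qed.

Lemma M_eq : \int[F]_x ninf x =
  \int[F]_(x in `]0%R, 1%R]) (x : R)%:E + (if 0 < F Aneg then +oo else 0).
Proof.
rewrite -(setUv Aneg) ge0_integral_setU //; last 4 first.
- exact: measurableC mAneg.
- by rewrite setUv; exact: mninf.
- move=> x _; rewrite /ninf; case: ltP => // x0; case: ifP => // _.
  by apply/disj_set2P; rewrite setICr.
rewrite addeC; congr (_ + _).
  rewrite (eq_integral (fun x => (fun x : R => x%:E) \_ `]0%R, 1%R] x)); last first.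
    move=> x; rewrite inE /= => /negP; rewrite -leNgt => x0.
    rewrite /ninf /patch ltNge x0 /= mem_setE in_itv /=.
    case: ifP => x1; last by rewrite andbF.
    by case: (ltrP 0 x) => //= xp; have -> : x = 0%R by apply/le_anti; rewrite xp.
  rewrite -integral_mkcondr; congr (integral _ _ _).
  apply/seteqP; split => x /=; first by case.
  move=> h; split => //; move: h; rewrite in_itv /= => /andP[x0 _] /= hn.
  by move: (lt_trans x0 hn); rewrite ltxx.
transitivity (\int[F]_(x in Aneg) (cst +oo) x).
  by apply: eq_integral => x; rewrite inE /= /ninf => ->.
rewrite integral_cst; last exact: mAneg.
have := measure_ge0 F Aneg; rewrite le_eqVlt => /predU1P[<-|h].
  by rewrite mule0 ltxx.
by rewrite h gt0_mulye.
exact: mAneg.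
Qed.

Lemma mqq (y : R) : measurable_fun setT (fun x => (qq y x)%:E).
Proof.
apply/measurable_EFinP; apply: measurable_maxr => //.
apply: measurable_funN; exact: mhh.
Qed.

Lemma psiE (b c y : R) : F `]1%R, +oo[%classic \is a fin_num -> (1 <= y)%R ->
  psiX b c F y * (y^-1)%:E =
  ((b * y - c * y ^+ 2 / 2 + fine (F `]1%R, +oo[%classic) / 2) / y)%:E - phi y.
Proof.
move=> hF y1; have y0 : (0 < y)%R by apply: lt_le_trans y1.
rewrite /psiX integralE.
have -> : \int[F]_x ((fun x => (gMMV ((x : R) * y) - x * y * ((Num.norm x <= 1)%R : bool)%:R)%:E)^\+ x)
    = (fine (F `]1%R, +oo[%classic) / 2)%:E.
  transitivity (\int[F]_x ((2^-1)%:E * (\1_(`]1%R, +oo[%classic) x)%:E)).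
    apply: eq_integral => x _; rewrite funeposE.
    rewrite -/(hh y x) (_ : maxe _ _ = (Num.max (hh y x) 0)%:E); last by rewrite EFin_max.
    rewrite hpos // indicE mem_setE in_itv /= andbT -EFinM mulrC.
    by case: (1 < x)%R; rewrite ?mul1r ?mul0r ?mulr0 ?mulr1.
  have I0 : forall x : R, [set: R] x -> 0 <= (\1_(`]1%R, +oo[%classic) x : R)%:E.
    by move=> x xT; rewrite lee_fin; rewrite indicE.
  have mI : measurable_fun setT (fun x : R => (\1_(`]1%R, +oo[%classic) x : R)%:E).
    by apply/measurable_EFinP; apply: measurable_indic; exact: measurable_itv.
  rewrite ge0_integralZl_EFin //.
  rewrite integral_indic //=.
  rewrite (@setIT R).
  by rewrite -(fineK hF) -EFinM mulrC.
have -> : \int[F]_x ((fun x => (gMMV ((x : R) * y) - x * y * ((Num.norm x <= 1)%R : bool)%:R)%:E)^\- x)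
    = \int[F]_x (qq y x)%:E.
  apply: eq_integral => x _; rewrite funenegE.
  by rewrite -/(hh y x) /qq EFin_max.
have -> : phi y = (y^-1)%:E * \int[F]_x (qq y x)%:E.
  have I0 : forall x, [set: R] x -> 0 <= (qq y x)%:E.
    by move=> x _; rewrite lee_fin /qq; case: (leP (- hh y x)%R 0%R) => // h; exact: ltW.
  have mI := mqq y.
  have yi0 : (0 <= y^-1)%R by rewrite invr_ge0 ltW.
  rewrite -ge0_integralZl_EFin //.
  rewrite /phi (max_l (x := y)) //; apply: eq_integral => x _.
  by rewrite -nnE // /nn mulrC EFinM.
rewrite addeA -EFinD muleBl //.
by rewrite -EFinM muleC.
Qed.

Lemma E1cvg (b c K : R) : (0 <= c)%R ->
  ((b * y - c * y ^+ 2 / 2 + K) / y)%:E @[y --> +oo%R] -->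
  (if (0 < c)%R then -oo else b%:E).
Proof.
move=> c0; case: (ltrP 0 c) => cp.
  apply/cvgeNyPle => A; near=> y.
  have y1 : (1 <= y)%R by near: y; apply: nbhs_pinfty_ge; rewrite num_real.
  have yS : (2 * (`|b| + `|K| + `|A|) / c <= y)%R.
    by near: y; apply: nbhs_pinfty_ge; rewrite num_real.
  have y0 : (0 < y)%R by apply: lt_le_trans y1.
  rewrite lee_fin ler_pdivrMr //.
  have cy : (2 * (`|b| + `|K| + `|A|) <= c * y)%R by rewrite -ler_pdivrMl.
  have hb : (b * y <= `|b| * y)%R by apply: ler_wpM2r; [exact: ltW|exact: ler_norm].
  have hK : (K <= `|K| * y)%R.
    by apply: le_trans (ler_norm K) _; rewrite ler_peMr.
  have hA : (- (A * y) <= `|A| * y)%R.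
    rewrite -mulNr; apply: ler_wpM2r; first exact: ltW.
    by rewrite -normrN; exact: ler_norm.
  have hn : (0 <= `|b| + `|K| + `|A|)%R by [].
  nra.
have -> : c = 0%R by apply/le_anti; rewrite cp c0.
apply: cvg_EFin; first by near=> y.
apply/cvgrPdist_le => e e0; near=> y.
have y1 : (1 <= y)%R by near: y; apply: nbhs_pinfty_ge; rewrite num_real.
have yS : (`|K| / e <= y)%R by near: y; apply: nbhs_pinfty_ge; rewrite num_real.
have y0 : (0 < y)%R by apply: lt_le_trans y1.
rewrite /= (_ : ((b * y - 0 * y ^+ 2 / 2 + K) / y = b + K / y)%R); last first.
  by field; rewrite gt_eqF.
rewrite opprD addrA subrr add0r normrN normrM normfV (gtr0_norm y0).
by rewrite ler_pdivrMr // mulrC -ler_pdivrMr.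
Unshelve. all: by end_near.
Qed.

Lemma I_ge0 : 0 <= \int[F]_(x in `]0%R, 1%R]) (x : R)%:E.
Proof.
apply: integral_ge0 => x; rewrite /= in_itv /= => /andP[x0 _].
by rewrite lee_fin ltW.
Qed.

Lemma final_eq (b c : R) :
  ((if (0 < c)%R then -oo else b%:E) + - (\int[F]_x ninf x) = psi_slope_limit b c F)%E
  /\ (psi_slope_limit b c F < +oo)%E.
Proof.
rewrite M_eq /psi_slope_limit -/Aneg.
move: I_ge0; case: (\int[F]_(x in `]0%R, 1%R]) (x : R)%:E) => [r| |] //= r0.
  case: (boolP (0 < c)%R) => hc; case: (boolP (0 < F Aneg)) => hA /=;
    rewrite ?adde0 ?sube0 ?oppe0; split => //; try exact: ltry.
  by rewrite addr0.
case: (boolP (0 < c)%R) => hc; case: (boolP (0 < F Aneg)) => hA /=;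
    rewrite ?adde0 ?sube0 ?oppe0; split => //; try exact: ltry.
Qed.

Lemma hF_fin : levy_measure F -> F `]1%R, +oo[%classic \is a fin_num.
Proof.
move=> [_ Fint]; rewrite ge0_fin_numE //.
apply: le_lt_trans Fint.
have -> : F `]1%R, +oo[%classic = \int[F]_x (\1_(`]1%R, +oo[%classic) x : R)%:E.
  by rewrite integral_indic //= (@setIT R).
apply: ge0_le_integral => //.
- by apply/measurable_EFinP; apply: measurable_indic; exact: measurable_itv.
- apply/measurable_EFinP; apply: measurable_minr => //.
- move=> x _; rewrite lee_fin indicE mem_setE in_itv /= andbT.
  case: (ltrP 1 x) => x1 /=; last by rewrite le_min sqr_ge0 ler01.
  rewrite le_min lexx andbT -[leLHS](expr1n _ 2) lerXn2r ?nnegrE ?ltW //.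
  exact: lt_trans x1.
Qed.
End WithF.
End S.

Theorem lemmaC1 (R : realType) (b c : R)
    (F : {measure set R -> \bar R}) :
  0 <= c -> levy_measure F ->
  ((psiX b c F y * (y^-1)%:E)%E @[y --> +oo] --> psi_slope_limit b c F) /\
  (psi_slope_limit b c F < +oo)%E.
Proof.
move=> c0 hL; have hF := @hF_fin R F hL.
have [E1 E2] := @final_eq R F b c.
split => //; rewrite -E1.
have Mge0 : (0 <= \int[F]_x (@ninf R) x)%E.
  by apply: integral_ge0 => x _; rewrite /ninf; case: ltP => // x0; case: ifP => // _.
have hdef : ((if (0 < c)%R then -oo else b%:E) +? - \int[F]_x (@ninf R) x)%E.
  case: (0 < c)%R; last exact: fin_num_adde_defr.
  rewrite adde_defC adde_defEninfty eqe_oppLR /=.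
  by apply/negP => /eqP h; move: Mge0; rewrite h.
have Hc := cvgeD hdef (@E1cvg R b c (fine (F `]1%R, +oo[%classic) / 2) c0) (cvgeN (@phi_cvg R F)).
apply: cvg_trans; last by apply: Hc; apply: filter_class.
apply: near_eq_cvg; near=> y.
have y1 : (1 <= y)%R by near: y; apply: nbhs_pinfty_ge; rewrite num_real.
by rewrite psiE.
Unshelve. all: by end_near.
Qed.
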